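(* Let $p\geq 2$ be an integer. Then $\mathcal{M}_3^p=\mathcal{M}_2^p\times_{\gamma_2}\mathcal{M}_2^p$; that is, $c=c_1+c_2\mathbf{i_3}\in\mathbb{M}(3)$ (with $c_1,c_2\in\mathbb{M}(2)$) lies in $\mathcal{M}_3^p$ if and only if both $c_1-c_2\mathbf{i_2}\in\mathcal{M}_2^p$ and $c_1+c_2\mathbf{i_2}\in\mathcal{M}_2^p$.
   Context: The tricomplex numbers $\mathbb{M}(3)$ form the commutative real algebra generated by commuting units $\mathbf{i_1},\mathbf{i_2},\mathbf{i_3}$ with $\mathbf{i_k}^2=-1$; set $\mathbf{j_1}=\mathbf{i_1}\mathbf{i_2}$, $\mathbf{j_2}=\mathbf{i_1}\mathbf{i_3}$, $\mathbf{j_3}=\mathbf{i_2}\mathbf{i_3}$, $\mathbf{i_4}=\mathbf{i_1}\mathbf{i_2}\mathbf{i_3}$. It has real basis $1,\mathbf{i_1},\mathbf{i_2},\mathbf{i_3},\mathbf{i_4},\mathbf{j_1},\mathbf{j_2},\mathbf{j_3}$ and norm $\|\cdot\|_3$ equal to the Euclidean norm of the 8 real coordinates. The bicomplex numbers $\mathbb{M}(2)$ are the subalgebra spanned by $1,\mathbf{i_1},\mathbf{i_2},\mathbf{j_1}$, with norm $\|\cdot\|_2$ the Euclidean norm of its 4 coordinates; every $\eta\in\mathbb{M}(3)$ is uniquely $\zeta_1+\zeta_2\mathbf{i_3}$ with $\zeta_1,\zeta_2\in\mathbb{M}(2)$. With $\gamma_2=\frac{1+\mathbf{j_3}}{2}$,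 $\overline{\gamma}_2=\frac{1-\mathbf{j_3}}{2}$, one has $\eta=(\zeta_1-\zeta_2\mathbf{i_2})\gamma_2+(\zeta_1+\zeta_2\mathbf{i_2})\overline{\gamma}_2$. For $X_1,X_2\subseteq\mathbb{M}(2)$, $X_1\times_{\gamma_2}X_2=\{u_1\gamma_2+u_2\overline{\gamma}_2 : u_1\in X_1,u_2\in X_2\}$. For $n\in\{2,3\}$ and $c\in\mathbb{M}(n)$, $Q_{p,c}(\eta)=\eta^p+c$, $Q_{p,c}^m$ its $m$-fold iterate, and $\mathcal{M}_n^p=\{c\in\mathbb{M}(n) : (Q_{p,c}^m(0))_{m\geq1}\text{ is bounded in }\|\cdot\|_n\}$. *)

(* Defs.v *)
From Stdlib Require Import Reals.
Open Scope R_scope.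

(** Bicomplex numbers M(2): a + b i1 + c i2 + d j1, with j1 = i1 i2. *)
Record M2 := mkM2 { re2 : R; i1c : R; i2c : R; j1c : R }.

Definition M2add (x y : M2) : M2 :=
  mkM2 (re2 x + re2 y) (i1c x + i1c y) (i2c x + i2c y) (j1c x + j1c y).
Definition M2opp (x : M2) : M2 :=
  mkM2 (- re2 x) (- i1c x) (- i2c x) (- j1c x).
Definition M2sub (x y : M2) : M2 := M2add x (M2opp y).
(* product using i1^2 = i2^2 = -1, i1 i2 = i2 i1 = j1 *)
Definition M2mul (x y : M2) : M2 :=
  let a := re2 x in let b := i1c x in let c := i2c x in let d := j1c x in
  let e := re2 y in let f := i1c y in let g := i2c y in let h := j1c y in
  mkM2 (a*e - b*f - c*g + d*h)
       (a*f + b*e - c*h - d*g)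
       (a*g + c*e - b*h - d*f)
       (a*h + d*e + b*g + c*f).
Definition M2zero : M2 := mkM2 0 0 0 0.
Definition M2one : M2 := mkM2 1 0 0 0.
Definition M2_i2 : M2 := mkM2 0 0 1 0.
Fixpoint M2pow (x : M2) (n : nat) : M2 :=
  match n with O => M2one | S k => M2mul x (M2pow x k) end.
Definition norm2 (x : M2) : R :=
  sqrt (re2 x ^ 2 + i1c x ^ 2 + i2c x ^ 2 + j1c x ^ 2).

(** Tricomplex numbers M(3): eta = z1 + z2 i3 with z1, z2 in M(2),
    i3 commuting with M(2) and i3^2 = -1. *)
Record M3 := mkM3 { fst3 : M2; snd3 : M2 }.

Definition M3add (x y : M3) : M3 :=
  mkM3 (M2add (fst3 x) (fst3 y)) (M2add (snd3 x) (snd3 y)).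
Definition M3mul (x y : M3) : M3 :=
  mkM3 (M2sub (M2mul (fst3 x) (fst3 y)) (M2mul (snd3 x) (snd3 y)))
       (M2add (M2mul (fst3 x) (snd3 y)) (M2mul (snd3 x) (fst3 y))).
Definition M3zero : M3 := mkM3 M2zero M2zero.
Definition M3one : M3 := mkM3 M2one M2zero.
Fixpoint M3pow (x : M3) (n : nat) : M3 :=
  match n with O => M3one | S k => M3mul x (M3pow x k) end.
(* Euclidean norm of the 8 real coordinates w.r.t. 1,i1,i2,j1,i3,j2,j3,i4 *)
Definition norm3 (x : M3) : R :=
  sqrt (re2 (fst3 x) ^ 2 + i1c (fst3 x) ^ 2 + i2c (fst3 x) ^ 2 + j1c (fst3 x) ^ 2
      + re2 (snd3 x) ^ 2 + i1c (snd3 x) ^ 2 + i2c (snd3 x) ^ 2 + j1c (snd3 x) ^ 2).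

Definition M2toM3 (u : M2) : M3 := mkM3 u M2zero.
(* gamma2 = (1 + j3)/2 with j3 = i2 i3 *)
Definition gamma2 : M3 := mkM3 (mkM2 (1/2) 0 0 0) (mkM2 0 0 (1/2) 0).
Definition gamma2bar : M3 := mkM3 (mkM2 (1/2) 0 0 0) (mkM2 0 0 (-(1/2)) 0).

Fixpoint Q2iter (p : nat) (c : M2) (m : nat) : M2 :=
  match m with O => M2zero | S k => M2add (M2pow (Q2iter p c k) p) c end.
Fixpoint Q3iter (p : nat) (c : M3) (m : nat) : M3 :=
  match m with O => M3zero | S k => M3add (M3pow (Q3iter p c k) p) c end.

Definition Mandel2 (p : nat) (c : M2) : Prop :=
  exists B : R, forall m : nat, (1 <= m)%nat -> norm2 (Q2iter p c m) <= B.
Definition Mandel3 (p : nat) (c : M3) : Prop :=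
  exists B : R, forall m : nat, (1 <= m)%nat -> norm3 (Q3iter p c m) <= B.

Definition gamma_prod (X1 X2 : M2 -> Prop) (eta : M3) : Prop :=
  exists u1 u2 : M2, X1 u1 /\ X2 u2 /\
    eta = M3add (M3mul (M2toM3 u1) gamma2) (M3mul (M2toM3 u2) gamma2bar).

(* Main.v *)
Require Import Defs.
From Stdlib Require Import Reals Lra Psatz.
Open Scope R_scope.

Definition phi1 (x : M3) : M2 := M2sub (fst3 x) (M2mul (snd3 x) M2_i2).
Definition phi2 (x : M3) : M2 := M2add (fst3 x) (M2mul (snd3 x) M2_i2).

Lemma M2_ext (x y : M2) : re2 x = re2 y -> i1c x = i1c y -> i2c x = i2c y -> j1c x = j1c y -> x = y.
Proof. destruct x, y; simpl; intros; subst; reflexivity. Qed.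
Lemma M3_ext (x y : M3) : fst3 x = fst3 y -> snd3 x = snd3 y -> x = y.
Proof. destruct x, y; simpl; intros; subst; reflexivity. Qed.

Ltac crush := repeat match goal with
  | x : M3 |- _ => destruct x
  | x : M2 |- _ => destruct x end;
  try (apply M3_ext); apply M2_ext;
  cbv beta iota zeta delta [phi1 phi2 M3mul M3add M2sub M2add M2opp M2mul M2_i2 M3one M2one
    M3zero M2zero M2toM3 gamma2 gamma2bar Defs.fst3 Defs.snd3 Defs.re2 Defs.i1c Defs.i2c Defs.j1c]; first [ring | field].

Lemma phi1_mul x y : phi1 (M3mul x y) = M2mul (phi1 x) (phi1 y). Proof. crush. Qed.
Lemma phi2_mul x y : phi2 (M3mul x y) = M2mul (phi2 x) (phi2 y). Proof. crush. Qed.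
Lemma phi1_add x y : phi1 (M3add x y) = M2add (phi1 x) (phi1 y). Proof. crush. Qed.
Lemma phi2_add x y : phi2 (M3add x y) = M2add (phi2 x) (phi2 y). Proof. crush. Qed.
Lemma phi1_one : phi1 M3one = M2one. Proof. crush. Qed.
Lemma phi2_one : phi2 M3one = M2one. Proof. crush. Qed.
Lemma phi1_zero : phi1 M3zero = M2zero. Proof. crush. Qed.
Lemma phi2_zero : phi2 M3zero = M2zero. Proof. crush. Qed.

Lemma phi1_pow x n : phi1 (M3pow x n) = M2pow (phi1 x) n.
Proof. induction n; simpl. apply phi1_one. rewrite phi1_mul, IHn; reflexivity. Qed.
Lemma phi2_pow x n : phi2 (M3pow x n) = M2pow (phi2 x) n.
Proof. induction n; simpl. apply phi2_one. rewrite phi2_mul, IHn; reflexivity. Qed.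

Lemma phi1_iter p c m : phi1 (Q3iter p c m) = Q2iter p (phi1 c) m.
Proof. induction m; simpl. apply phi1_zero. rewrite phi1_add, phi1_pow, IHm; reflexivity. Qed.
Lemma phi2_iter p c m : phi2 (Q3iter p c m) = Q2iter p (phi2 c) m.
Proof. induction m; simpl. apply phi2_zero. rewrite phi2_add, phi2_pow, IHm; reflexivity. Qed.

Lemma sqrt_scale U A k : 0 <= A -> 0 <= k -> U <= k^2 * A -> sqrt U <= k * sqrt A.
Proof.
  intros HA Hk H. rewrite <- (sqrt_pow2 k Hk). rewrite <- sqrt_mult_alt by nra.
  apply sqrt_le_1_alt; lra.
Qed.

Lemma sqrt_sum A B C : 0 <= B -> 0 <= C -> A <= B + C -> sqrt A <= sqrt B + sqrt C.
Proof.
  intros HB HC H. assert (0 <= sqrt B) by apply sqrt_pos. assert (0 <= sqrt C) by apply sqrt_pos.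
  rewrite <- (sqrt_pow2 (sqrt B + sqrt C)) by lra. apply sqrt_le_1_alt.
  pose proof (sqrt_sqrt B HB). pose proof (sqrt_sqrt C HC). nra.
Qed.

Definition sq2 (x : M2) : R := re2 x ^ 2 + i1c x ^ 2 + i2c x ^ 2 + j1c x ^ 2.
Lemma sq2_nonneg x : 0 <= sq2 x. Proof. unfold sq2; nra. Qed.
Lemma sq_ident x : sq2 (phi1 x) + sq2 (phi2 x) =
  2 * (re2 (fst3 x) ^ 2 + i1c (fst3 x) ^ 2 + i2c (fst3 x) ^ 2 + j1c (fst3 x) ^ 2
      + re2 (snd3 x) ^ 2 + i1c (snd3 x) ^ 2 + i2c (snd3 x) ^ 2 + j1c (snd3 x) ^ 2).
Proof.
  destruct x as [[a b c d] [e f g h]].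
  unfold sq2, phi1, phi2, M2sub, M2add, M2opp, M2mul, M2_i2; simpl. ring.
Qed.
Lemma norm_phi1 x : norm2 (phi1 x) <= 2 * norm3 x.
Proof.
  pose proof (sq_ident x). pose proof (sq2_nonneg (phi1 x)). pose proof (sq2_nonneg (phi2 x)).
  unfold norm2, norm3. fold (sq2 (phi1 x)). apply sqrt_scale; lra.
Qed.
Lemma norm_phi2 x : norm2 (phi2 x) <= 2 * norm3 x.
Proof.
  pose proof (sq_ident x). pose proof (sq2_nonneg (phi1 x)). pose proof (sq2_nonneg (phi2 x)).
  unfold norm2, norm3. fold (sq2 (phi2 x)). apply sqrt_scale; lra.
Qed.
Lemma norm_back x : norm3 x <= norm2 (phi1 x) + norm2 (phi2 x).
Proof.
  pose proof (sq_ident x). pose proof (sq2_nonneg (phi1 x)). pose proof (sq2_nonneg (phi2 x)).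
  unfold norm2, norm3. fold (sq2 (phi1 x)) (sq2 (phi2 x)). apply sqrt_sum; lra.
Qed.

Lemma key p c : Mandel3 p c <-> Mandel2 p (phi1 c) /\ Mandel2 p (phi2 c).
Proof.
  split.
  - intros [B HB]. split; exists (2*B); intros m Hm; specialize (HB m Hm).
    + rewrite <- phi1_iter. pose proof (norm_phi1 (Q3iter p c m)). lra.
    + rewrite <- phi2_iter. pose proof (norm_phi2 (Q3iter p c m)). lra.
  - intros [[B1 H1] [B2 H2]]. exists (B1 + B2). intros m Hm.
    pose proof (norm_back (Q3iter p c m)). rewrite phi1_iter, phi2_iter in H.
    specialize (H1 m Hm). specialize (H2 m Hm). lra.
Qed.

Theorem mainTheorem12 (p : nat) (hp : (2 <= p)%nat) :
  (forall c : M3, Mandel3 p c <-> gamma_prod (Mandel2 p) (Mandel2 p) c) /\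
  (forall c1 c2 : M2,
     Mandel3 p (mkM3 c1 c2) <->
     (Mandel2 p (M2sub c1 (M2mul c2 M2_i2)) /\
      Mandel2 p (M2add c1 (M2mul c2 M2_i2)))).
Proof.
  split.
  - intros c. rewrite key. split.
    + intros [H1 H2]. exists (phi1 c), (phi2 c). split; [|split]; auto.
      unfold M2toM3, gamma2, gamma2bar. crush.
    + intros [u1 [u2 [H1 [H2 ->]]]].
      assert (E1 : phi1 (M3add (M3mul (M2toM3 u1) gamma2) (M3mul (M2toM3 u2) gamma2bar)) = u1)
        by (unfold M2toM3, gamma2, gamma2bar; crush).
      assert (E2 : phi2 (M3add (M3mul (M2toM3 u1) gamma2) (M3mul (M2toM3 u2) gamma2bar)) = u2)
        by (unfold M2toM3, gamma2, gamma2bar; crush).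
      rewrite E1, E2; auto.
  - intros c1 c2. apply key.
Qed.
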